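(* Let $G$ be a finite connected groupoid with $G_0=\{e_1,\dots,e_r\}$, $A=\bigoplus_{i=1}^r A_i$ a unital ring with $A_i:=A_{e_i}$ having identity $1_i$, and $\alpha=(A_g,\alpha_g)_{g\in G}$ a unital partial action of $G$ on $A$. If there exists $a\in C(A)$ such that $t_i(a)=1_i$ for all $i=1,\dots,r$, then $A\subset A\star_\alpha G$ is a semisimple ring extension.
   Context: A groupoid $G$ is a small category in which every morphism is invertible; $G_0$ is its object set (objects identified with identity morphisms), $s,t$ source and target; $gh$ is defined iff $s(g)=t(h)$; $G(e,f)$ is the set of morphisms from $e$ to $f$; $G$ is connected if $G(e,f)\neq\emptyset$ for all $e,f\in G_0$. A unital partial action of $G$ on $A$ is a family $\alpha=(A_g,\alpha_g)_{g\in G}$ where $A_{t(g)}$ is a two-sided ideal of $A$, $A_g=A1_g$ is a two-sided ideal of $A_{t(g)}$ with $1_g$ a central idempotent of $A$, $\alpha_g:A_{g^{-1}}\to A_g$ a ring isomorphism, such that $\alpha_e=\mathrm{id}_{A_e}$ for $e\in G_0$, $\alpha_h^{-1}(A_{g^{-1}}\cap A_h)\subseteq A_{(gh)^{-1}}$ and $\alpha_g(\alpha_h(x))=\alpha_{gh}(x)$ for $x\in\alpha_h^{-1}(A_{g^{-1}}\cap A_h)$, whenever $s(g)=t(h)$. The partial skew groupoid ring $A\star_\alpha G=\bigoplus_{g\in G}A_g\delta_g$ has multiplication $(a_g\delta_g)(b_h\delta_h)=\alpha_g(\alpha_{g^{-1}}(a_g)b_h)\delta_{gh}$ if $s(g)=t(h)$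 and $0$ otherwise; it is unital with $1=\sum_{e\in G_0}1_e\delta_e$, and $A$ is regarded as a subring via $a\mapsto\sum_{e\in G_0}(a1_e)\delta_e$. Trace maps: $t_{i,j}(a)=\sum_{g\in G(e_i,e_j)}\alpha_g(a1_{g^{-1}})$ and $t_j(a)=\sum_{i=1}^r t_{i,j}(a)$. $C(A)$ is the center of $A$. A ring extension $R\subseteq S$ is semisimple if every exact sequence of left $S$-modules that splits as a sequence of left $R$-modules also splits as a sequence of left $S$-modules. *)

(* Defs.v *)
From HB Require Import structures.
From mathcomp Require Import all_boot all_order all_algebra.
Set Implicit Arguments. Unset Strict Implicit. Unset Printing Implicit Defensive.
Import GRing.Theory.
Local Open Scope ring_scope.

(* Finite groupoids.  Objects [obj] and morphisms [mor] are finite types;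
   objects are identified with identity morphisms through [idm].
   [comp g h] is meaningful exactly when [src g = tgt h].               *)
Record groupoid := Groupoid {
  obj : finType;
  mor : finType;
  src : mor -> obj;
  tgt : mor -> obj;
  idm : obj -> mor;
  comp : mor -> mor -> mor;
  ginv : mor -> mor;
  src_idm : forall e, src (idm e) = e;
  tgt_idm : forall e, tgt (idm e) = e;
  src_comp : forall g h, src g = tgt h -> src (comp g h) = src h;
  tgt_comp : forall g h, src g = tgt h -> tgt (comp g h) = tgt g;
  compA : forall g h k, src g = tgt h -> src h = tgt k ->
            comp (comp g h) k = comp g (comp h k);
  comp_idl : forall g, comp (idm (tgt g)) g = g;
  comp_idr : forall g, comp g (idm (src g)) = g;
  src_ginv : forall g, src (ginv g) = tgt g;
  tgt_ginv : forall g, tgt (ginv g) = src g;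
  comp_ginvr : forall g, comp g (ginv g) = idm (tgt g);
  comp_ginvl : forall g, comp (ginv g) g = idm (src g)
}.

Definition homset (G : groupoid) (e f : obj G) : pred (mor G) :=
  fun g => (src g == e) && (tgt g == f).

Definition connected (G : groupoid) : Prop :=
  forall e f : obj G, exists g : mor G, (src g = e) /\ (tgt g = f).

(* Ideals A_g = A 1_g given by central idempotents [one g].            *)
Definition in_ideal (A : pzRingType) (u : A) (x : A) : Prop :=
  exists y : A, x = y * u.

Definition central (A : pzRingType) (a : A) : Prop :=
  forall b : A, a * b = b * a.

(* Unital partial action alpha = (A_g, alpha_g)_{g in G} of G on A,
   with A_g = A (one g) and alpha g : A_{g^-1} -> A_g (given as a total
   function on A, only its restriction to A_{g^-1} matters).            *)
Definition unital_partial_action (G : groupoid) (A : pzRingType)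
    (one : mor G -> A) (alpha : mor G -> A -> A) : Prop :=
  [/\
      (forall g, central (one g) /\ one g * one g = one g),
      (forall g x, in_ideal (one g) x -> in_ideal (one (idm (tgt g))) x),
      (forall g,
         [/\ forall x, in_ideal (one (ginv g)) x -> in_ideal (one g) (alpha g x),
             forall x y, in_ideal (one (ginv g)) x -> in_ideal (one (ginv g)) y ->
               alpha g (x + y) = alpha g x + alpha g y,
             forall x y, in_ideal (one (ginv g)) x -> in_ideal (one (ginv g)) y ->
               alpha g (x * y) = alpha g x * alpha g y,
             forall x y, in_ideal (one (ginv g)) x -> in_ideal (one (ginv g)) y ->
               alpha g x = alpha g y -> x = y
           & forall y, in_ideal (one g) y ->
               exists2 x, in_ideal (one (ginv g)) x & alpha g x = y]),
      (forall e x, in_ideal (one (idm e)) x -> alpha (idm e) x = x)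
    &
      (forall g h, src g = tgt h -> forall x,
         in_ideal (one (ginv h)) x ->
         in_ideal (one (ginv g)) (alpha h x) -> in_ideal (one h) (alpha h x) ->
         in_ideal (one (ginv (comp g h))) x /\
         alpha g (alpha h x) = alpha (comp g h) x)].

(* The partial skew groupoid ring A *_alpha G = (+)_g A_g delta_g.
   An element  sum_g a_g delta_g  is represented by the function g |-> a_g
   (subject to a_g in A_g).                                              *)
Section Skew.
Variables (G : groupoid) (A : pzRingType) (one : mor G -> A)
          (alpha : mor G -> A -> A).

Definition skew_elt (f : mor G -> A) : Prop := forall g, in_ideal (one g) (f g).

Definition skew_add (f k : mor G -> A) : mor G -> A := fun g => f g + k g.

Definition skew_mul (f k : mor G -> A) : mor G -> A := fun x =>
  \sum_(g : mor G) \sum_(h : mor G | (src g == tgt h) && (comp g h == x))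
     alpha g (alpha (ginv g) (f g) * k h).

Definition skew_emb (a : A) : mor G -> A := fun g =>
  if g == idm (src g) then a * one g else 0.

Definition skew_one : mor G -> A := skew_emb 1.

Definition skew_module (M : zmodType) (act : (mor G -> A) -> M -> M) : Prop :=
  [/\ forall f m m', skew_elt f -> act f (m + m') = act f m + act f m',
      forall f k m, skew_elt f -> skew_elt k ->
        act (skew_add f k) m = act f m + act k m,
      forall f k m, skew_elt f -> skew_elt k ->
        act (skew_mul f k) m = act f (act k m)
    & forall m, act skew_one m = m].

Definition additive_map (M N : zmodType) (phi : M -> N) : Prop :=
  forall x y, phi (x + y) = phi x + phi y.

Definition skew_linear (M N : zmodType) (actM : (mor G -> A) -> M -> M)
    (actN : (mor G -> A) -> N -> N) (phi : M -> N) : Prop :=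
  additive_map phi /\
  forall f m, skew_elt f -> phi (actM f m) = actN f (phi m).

Definition base_linear (M N : zmodType) (actM : (mor G -> A) -> M -> M)
    (actN : (mor G -> A) -> N -> N) (phi : M -> N) : Prop :=
  additive_map phi /\
  forall a m, phi (actM (skew_emb a) m) = actN (skew_emb a) (phi m).

(* The ring extension A subset A *_alpha G is semisimple: every (short)
   exact sequence 0 -> L -i-> M -p-> N -> 0 of left (A *_alpha G)-modules
   which splits as a sequence of left A-modules also splits as a sequence
   of left (A *_alpha G)-modules.  Splitting = existence of a section of p
   which is linear for the relevant ring.                                *)
Definition semisimple_skew_extension : Prop :=
  forall (L M N : zmodType)
         (actL : (mor G -> A) -> L -> L) (actM : (mor G -> A) -> M -> M)
         (actN : (mor G -> A) -> N -> N) (i : L -> M) (p : M -> N),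
    skew_module actL -> skew_module actM -> skew_module actN ->
    skew_linear actL actM i -> skew_linear actM actN p ->
    injective i -> (forall n, exists m, p m = n) ->
    (forall m, p m = 0 <-> exists l, i l = m) ->
    (exists q : N -> M, base_linear actN actM q /\ forall n, p (q n) = n) ->
    (exists q : N -> M, skew_linear actN actM q /\ forall n, p (q n) = n).

End Skew.

Definition trace_ij (G : groupoid) (A : pzRingType) (one : mor G -> A)
    (alpha : mor G -> A -> A) (ei ej : obj G) (a : A) : A :=
  \sum_(g : mor G | homset ei ej g) alpha g (a * one (ginv g)).

Definition trace_j (G : groupoid) (A : pzRingType) (one : mor G -> A)
    (alpha : mor G -> A -> A) (ej : obj G) (a : A) : A :=
  \sum_(ei : obj G) trace_ij one alpha ei ej a.

(* Main.v *)
Require Import Defs.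
From HB Require Import structures.
From mathcomp Require Import all_boot all_order all_algebra.
Set Implicit Arguments. Unset Strict Implicit. Unset Printing Implicit Defensive.
Import GRing.Theory.
Local Open Scope ring_scope.

Section GLemmas.
Variable G : groupoid.
Local Notation gcompA := (@Defs.compA G).
Local Notation gcomp := (@Defs.comp G).
Implicit Types g h k x y : mor G.

Lemma ginvK g : ginv (ginv g) = g.
Proof.
rewrite -[LHS]comp_idr src_ginv tgt_ginv -comp_ginvl.
rewrite -gcompA ?comp_ginvl ?tgt_ginv ?src_ginv // ?comp_idl //.
by rewrite tgt_ginv.
Qed.

Lemma ginv_idm (e : obj G) : ginv (idm e) = idm e.
Proof.
have := comp_idl (ginv (idm e)).
by rewrite tgt_ginv src_idm comp_ginvr tgt_idm => <-.
Qed.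

Lemma comp_KV h g : tgt g = tgt h -> gcomp h (gcomp (ginv h) g) = g.
Proof.
move=> e; rewrite -gcompA ?tgt_ginv ?src_ginv //.
by rewrite comp_ginvr -e comp_idl.
Qed.

Lemma comp_VK h k : tgt k = src h -> gcomp (ginv h) (gcomp h k) = k.
Proof.
move=> e; rewrite -gcompA ?tgt_ginv ?src_ginv //.
by rewrite comp_ginvl -e comp_idl.
Qed.

Lemma ginv_comp x y : src x = tgt y -> ginv (gcomp x y) = gcomp (ginv y) (ginv x).
Proof.
move=> e.
set z := gcomp x y; set w := gcomp (ginv y) (ginv x).
have tw : tgt w = src z by rewrite /w tgt_comp ?tgt_ginv ?src_ginv // /z src_comp.
have ew : w = gcomp (ginv z) (gcomp z w).
  by rewrite -gcompA ?src_ginv ?tgt_ginv // comp_ginvl -tw comp_idl.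
have zw : gcomp z w = idm (tgt z).
  rewrite /z /w gcompA //; last by rewrite tgt_comp ?src_ginv ?tgt_ginv //.
  rewrite -(@Defs.compA G y) ?src_ginv ?tgt_ginv // comp_ginvr -e.
  by rewrite -(tgt_ginv x) comp_idl comp_ginvr tgt_comp.
by rewrite ew zw -(src_ginv z) comp_idr.
Qed.
End GLemmas.

Section PA.
Variables (G : groupoid) (A : pzRingType) (one : mor G -> A) (alpha : mor G -> A -> A).
Hypothesis upa : unital_partial_action one alpha.
Local Notation gcomp := (@Defs.comp G).
Implicit Types g h k : mor G.

Lemma oC g b : one g * b = b * one g.
Proof. by case: upa => H _ _ _ _; case: (H g). Qed.

Lemma oo g : one g * one g = one g.
Proof. by case: upa => H _ _ _ _; case: (H g). Qed.

Lemma inI g x : in_ideal (one g) x <-> x * one g = x.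
Proof.
split; last by move=> e; exists x.
by case=> y ->; rewrite -mulrA oo.
Qed.

Lemma o_sub g : one g * one (idm (tgt g)) = one g.
Proof.
case: upa => _ H _ _ _; apply/inI; apply: H; apply/inI; exact: oo.
Qed.

Lemma al_in g x : x * one (ginv g) = x -> alpha g x * one g = alpha g x.
Proof. by case: upa => _ _ H _ _ /inI hx; case: (H g) => H1 _ _ _ _; apply/inI; apply: H1. Qed.

Lemma alD g x y : x * one (ginv g) = x -> y * one (ginv g) = y ->
  alpha g (x + y) = alpha g x + alpha g y.
Proof. by case: upa => _ _ H _ _ /inI hx /inI hy; case: (H g) => _ H1 _ _ _; apply: H1. Qed.

Lemma alM g x y : x * one (ginv g) = x -> y * one (ginv g) = y ->
  alpha g (x * y) = alpha g x * alpha g y.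
Proof. by case: upa => _ _ H _ _ /inI hx /inI hy; case: (H g) => _ _ H1 _ _; apply: H1. Qed.

Lemma al0 g : alpha g 0 = 0.
Proof.
have h0 : (0 : A) * one (ginv g) = 0 by rewrite mul0r.
have e := alD h0 h0; rewrite addr0 in e.
by apply: (addrI (alpha g 0)); rewrite addr0 -e.
Qed.

Lemma al_id (e : obj G) x : x * one (idm e) = x -> alpha (idm e) x = x.
Proof. by case: upa => _ _ _ H _ /inI hx; apply: H. Qed.

Lemma al_inv g x : x * one g = x -> alpha g (alpha (ginv g) x) = x.
Proof.
case: upa => _ _ _ _ H hx.
have hx' : x * one (ginv (ginv g)) = x by rewrite ginvK.
have i1 := al_in hx'.
have [_ ->] : in_ideal (one (ginv (gcomp g (ginv g)))) x /\
   alpha g (alpha (ginv g) x) = alpha (gcomp g (ginv g)) x.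
  apply: H; first by rewrite tgt_ginv.
  - by apply/inI.
  - by apply/inI.
  - by apply/inI.
rewrite comp_ginvr al_id //.
by rewrite -{1}hx -mulrA o_sub.
Qed.

Lemma al_one g : alpha g (one (ginv g)) = one g.
Proof.
have e1 : one g = alpha g (alpha (ginv g) (one g)) by rewrite al_inv // oo.
have hb : alpha (ginv g) (one g) * one (ginv g) = alpha (ginv g) (one g).
  by apply: al_in; rewrite ginvK oo.
have : alpha g (one (ginv g)) * one g = one g.
  rewrite {2}e1 [X in _ * X]e1 -alM ?oo //.
  by rewrite oC hb.
by rewrite al_in // oo.
Qed.

End PA.

Section PA2.
Variables (G : groupoid) (A : pzRingType) (one : mor G -> A) (alpha : mor G -> A -> A).
Hypothesis upa : unital_partial_action one alpha.
Local Notation gcomp := (@Defs.comp G).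
Implicit Types g h k : mor G.

Lemma L_incl g h x : tgt g = tgt h -> x * one g = x -> x * one h = x ->
  alpha (ginv g) x * one (gcomp (ginv g) h) = alpha (ginv g) x.
Proof.
move=> e hg hh.
case: (upa) => _ _ _ _ H.
have hx' : x * one (ginv (ginv g)) = x by rewrite ginvK.
have i0 := al_in upa hx'.
have a1 : alpha g (alpha (ginv g) x) = x by rewrite (al_inv upa).
have [i2 _] : in_ideal (one (ginv (gcomp (ginv h) g))) (alpha (ginv g) x) /\ 
   alpha (ginv h) (alpha g (alpha (ginv g) x)) = alpha (gcomp (ginv h) g) (alpha (ginv g) x).
  apply: H; first by rewrite src_ginv.
  - by apply/(inI upa).
  - by apply/(inI upa); rewrite ginvK a1.
  - by apply/(inI upa); rewrite a1.
move: i2; rewrite ginv_comp ?src_ginv // ginvK => /(inI upa).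
by [].
Qed.

Lemma I1 g h : tgt g = tgt h ->
  alpha (ginv g) (one g * one h) = one (ginv g) * one (gcomp (ginv g) h).
Proof.
move=> e.
set u := alpha (ginv g) (one g * one h).
set v := one (ginv g) * one (gcomp (ginv g) h).
have xg : one g * one h * one g = one g * one h by rewrite -mulrA [one h * _](oC upa) mulrA (oo upa).
have xh : one g * one h * one h = one g * one h by rewrite -mulrA (oo upa).
have ug : u * one (ginv g) = u by apply: (al_in upa); rewrite ginvK.
have ugh : u * one (gcomp (ginv g) h) = u by apply: L_incl.
have vg : v * one (ginv g) = v by rewrite /v -mulrA [one (gcomp _ _) * _](oC upa) mulrA (oo upa).
have vgh : v * one (gcomp (ginv g) h) = v by rewrite /v -mulrA (oo upa).
have ev : v = alpha (ginv g) (alpha g v).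
  by have := al_inv upa vg; rewrite ginvK.
have wg : alpha g v * one g = alpha g v by apply: (al_in upa).
have tgh : tgt (ginv g) = tgt (gcomp (ginv g) h).
  by rewrite tgt_comp // src_ginv.
have wh : alpha g v * one h = alpha g v.
  have := L_incl tgh vg vgh; rewrite ginvK comp_KV //.
have ew : alpha g v = alpha g v * (one g * one h) by rewrite mulrA wg wh.
have vu : v = v * u.
  by rewrite {1}ev ew (alM upa) ?ginvK // -ev.
have uv : u = u * v by rewrite /v mulrA ug ugh.
rewrite uv {2}vu /v.
by rewrite -!mulrA mulrA ug ugh (oC upa (gcomp (ginv g) h) u) ugh (oC upa (ginv g) u) ug.
Qed.

End PA2.

From Stdlib Require Import FunctionalExtensionality.

Definition mono (G : groupoid) (A : pzRingType) (x : A) (g : mor G) : mor G -> A :=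
  fun k => if k == g then x else 0.

Section SK.
Variables (G : groupoid) (A : pzRingType) (one : mor G -> A) (alpha : mor G -> A -> A).
Hypothesis upa : unital_partial_action one alpha.
Local Notation gcomp := (@Defs.comp G).
Implicit Types g h k : mor G.
Local Notation mono := (@mono G A).
Local Notation smul := (skew_mul alpha).
Local Notation emb := (skew_emb one).

Lemma monoMul x g y h :
  smul (mono x g) (mono y h) =
  if src g == tgt h then mono (alpha g (alpha (ginv g) x * y)) (gcomp g h)
  else (fun _ => 0).
Proof.
apply: functional_extensionality => k; rewrite /skew_mul /mono.
rewrite (bigD1 g) //= [X in _ + X]big1 ?addr0; last first.
  move=> g1 ne; apply: big1 => h1 _.
  by rewrite (negbTE ne) (al0 upa) mul0r (al0 upa).
rewrite eqxx big_mkcond (bigD1 h) //= [X in _ + X]big1 ?addr0; last first.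
  move=> h1 ne; rewrite (negbTE ne) mulr0 (al0 upa); by case: ifP.
rewrite eqxx; case: (src g == tgt h) => //=.
by rewrite eq_sym.
Qed.

Lemma mono_elt x g : x * one g = x -> skew_elt one (mono x g).
Proof.
move=> hx k; rewrite /mono; case: eqP => [->|_]; first by apply/(inI upa).
by exists 0; rewrite mul0r.
Qed.

Lemma emb_elt c : skew_elt one (emb c).
Proof.
move=> k; rewrite /skew_emb; case: ifP => _; first by exists c.
by exists 0; rewrite mul0r.
Qed.

Lemma mono0 g : mono 0 g = (fun _ => 0).
Proof. by apply: functional_extensionality => k; rewrite /mono; case: ifP. Qed.

Section Mod.
Variables (M : zmodType) (act : (mor G -> A) -> M -> M).
Hypothesis hM : skew_module one alpha act.

Lemma zero_elt : skew_elt one (fun _ : mor G => (0 : A)).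
Proof. by move=> k; exists 0; rewrite mul0r. Qed.

Lemma act0f m : act (fun _ => 0) m = 0.
Proof.
case: hM => _ H _ _.
have := H _ _ m zero_elt zero_elt.
have -> : skew_add (fun _ : mor G => (0:A)) (fun _ => 0) = (fun _ => 0).
  by apply: functional_extensionality => k; rewrite /skew_add addr0.
by move=> e; apply: (addrI (act (fun _ => 0) m)); rewrite addr0 -e.
Qed.

Lemma act_m0 f : skew_elt one f -> act f 0 = 0.
Proof.
case: hM => H _ _ _ hf.
have := H f 0 0 hf; rewrite addr0 => e.
by apply: (addrI (act f 0)); rewrite addr0 -e.
Qed.

Lemma act_sum_m f (I : Type) (r : seq I) (P : pred I) (F : I -> M) :
  skew_elt one f ->
  act f (\sum_(i <- r | P i) F i) = \sum_(i <- r | P i) act f (F i).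
Proof.
move=> hf; case: hM => H _ _ _.
exact: (big_morph (act f) (fun x y => H f x y hf) (act_m0 hf)).
Qed.

Lemma act_mul f f2 m : skew_elt one f -> skew_elt one f2 ->
  act f (act f2 m) = act (smul f f2) m.
Proof. by case: hM => _ _ H _ hf hk; rewrite H. Qed.

Lemma act_mono0 g m : act (mono 0 g) m = 0.
Proof. by rewrite mono0 act0f. Qed.

Lemma act_monoD x y g m : x * one g = x -> y * one g = y ->
  act (mono (x + y) g) m = act (mono x g) m + act (mono y g) m.
Proof.
move=> hx hy; case: hM => _ H _ _.
rewrite -H; try exact: mono_elt.
congr act; apply: functional_extensionality => k.
by rewrite /skew_add /mono; case: ifP => //; rewrite addr0.
Qed.

Lemma act_mono_sum (I : Type) (r : seq I) (P : pred I) (F : I -> A) g m :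
  (forall i, P i -> F i * one g = F i) ->
  act (mono (\sum_(i <- r | P i) F i) g) m = \sum_(i <- r | P i) act (mono (F i) g) m.
Proof.
move=> hF.
suff [] : (\sum_(i <- r | P i) F i) * one g = \sum_(i <- r | P i) F i /\
   act (mono (\sum_(i <- r | P i) F i) g) m = \sum_(i <- r | P i) act (mono (F i) g) m by [].
apply: (big_rec2 (fun y1 y2 => y1 * one g = y1 /\ act (mono y1 g) m = y2)).
  by rewrite mul0r act_mono0.
move=> i y1 y2 Pi [h1 h2]; split; first by rewrite mulrDl h1 hF.
by rewrite act_monoD ?hF // h2.
Qed.

Lemma L_dec f m : skew_elt one f -> act f m = \sum_k act (mono (f k) k) m.
Proof.
move=> hf.
pose fs (s : seq (mor G)) := fun k => if k \in s then f k else 0.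
have fs_elt s : skew_elt one (fs s).
  by move=> k; rewrite /fs; case: ifP => _; [apply: hf | exists 0; rewrite mul0r].
have H s : uniq s -> act (fs s) m = \sum_(k <- s) act (mono (f k) k) m.
  elim: s => [|x s IH] /=.
    move=> _; rewrite big_nil.
    have -> : fs [::] = (fun _ => 0) by apply: functional_extensionality.
    exact: act0f.
  case/andP=> nx us; rewrite big_cons -IH //.
  case: hM => _ H _ _.
  have hfx : f x * one x = f x by apply/(inI upa).
  rewrite -H; [|exact: mono_elt|exact: fs_elt].
  congr act; apply: functional_extensionality => k.
  rewrite /skew_add /fs /mono in_cons.
  case: (eqVneq k x) => [->|ne] /=; first by rewrite (negbTE nx) addr0.
  by rewrite add0r.
have -> : f = fs (enum (mor G)).
  by apply: functional_extensionality => k; rewrite /fs mem_enum.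
rewrite H ?enum_uniq // big_enum /=.
by apply: eq_bigr => k _; rewrite /fs mem_enum.
Qed.


Lemma actMM x g y h m : x * one g = x -> y * one h = y ->
  act (mono x g) (act (mono y h) m) =
  if src g == tgt h then act (mono (alpha g (alpha (ginv g) x * y)) (gcomp g h)) m else 0.
Proof.
move=> hx hy; rewrite act_mul; [|exact: mono_elt|exact: mono_elt].
rewrite (monoMul x g y h); case: ifP => _ //; exact: act0f.
Qed.

Lemma emb_in c j : emb c j * one j = emb c j.
Proof. by apply/(inI upa); apply: emb_elt. Qed.

Lemma R1 c x h m : x * one h = x ->
  act (emb c) (act (mono x h) m) = act (mono (c * x) h) m.
Proof.
move=> hx.
have hxt : x * one (idm (tgt h)) = x by rewrite -hx -mulrA (o_sub upa).
rewrite (L_dec _ (emb_elt c)).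
rewrite (bigD1 (idm (tgt h))) //= [X in _ + X]big1 ?addr0; last first.
  move=> j ne; rewrite actMM ?emb_in //; case: ifP => // sj.
  have nj : j != idm (src j) by rewrite (eqP sj).
  by rewrite /skew_emb (negbTE nj) (al0 upa) mul0r (al0 upa) act_mono0.
rewrite actMM ?emb_in // src_idm eqxx /skew_emb src_idm eqxx ginv_idm comp_idl.
rewrite (al_id upa); last by rewrite -mulrA hxt.
rewrite (al_id upa); last by rewrite -mulrA (oo upa).
by rewrite -mulrA (oC upa) hxt.
Qed.

Lemma R2 x g c m : x * one g = x ->
  act (mono x g) (act (emb c) m) = act (mono (x * alpha g (c * one (ginv g))) g) m.
Proof.
move=> hx.
rewrite (L_dec _ (emb_elt c)) act_sum_m; last exact: mono_elt.
rewrite (bigD1 (idm (src g))) //= [X in _ + X]big1 ?addr0; last first.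
  move=> j ne; rewrite actMM ?emb_in //; case: ifP => // sj.
  have nj : j != idm (src j).
    apply/negP => /eqP ej; move: ne.
    have tj : tgt j = src j by rewrite {1}ej tgt_idm.
    by rewrite (eqP sj) tj -ej eqxx.
  by rewrite /skew_emb (negbTE nj) mulr0 (al0 upa) act_mono0.
rewrite actMM ?emb_in // tgt_idm eqxx /skew_emb src_idm eqxx comp_idr.
set y := alpha (ginv g) x.
have hy : y * one (ginv g) = y by apply: (al_in upa); rewrite ginvK.
have e1 : y * (c * one (idm (src g))) = y * (c * one (ginv g)).
  rewrite -{1}hy -mulrA; congr (y * _).
  rewrite (oC upa) -mulrA; congr (c * _).
  by rewrite (oC upa) -(tgt_ginv g) (o_sub upa).
rewrite e1 (alM upa) ?hy //; last by rewrite -mulrA (oo upa).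
by rewrite /y (al_inv upa).
Qed.

Lemma act_one m : act (skew_one one) m = \sum_(e : obj G) act (mono (one (idm e)) (idm e)) m.
Proof.
rewrite (L_dec _ (emb_elt 1)).
rewrite (partition_big (fun k => src k) predT) //=.
apply: eq_bigr => e _.
rewrite (bigD1 (idm e)) /= ?src_idm ?eqxx // [X in _ + X]big1 ?addr0; last first.
  move=> k /andP [/eqP sk ne].
  have nk : k != idm (src k) by rewrite sk.
  by rewrite /skew_one /skew_emb (negbTE nk) act_mono0.
by rewrite /skew_one /skew_emb src_idm eqxx mul1r.
Qed.

End Mod.
End SK.

Local Notation gcomp := Defs.comp.

Lemma addm_sum (M N : zmodType) (phi : M -> N) (I : Type) (r : seq I) (P : pred I) (F : I -> M) :
  additive_map phi -> phi (\sum_(i <- r | P i) F i) = \sum_(i <- r | P i) phi (F i).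
Proof.
move=> hp.
have p0 : phi 0 = 0.
  by apply: (addrI (phi 0)); rewrite addr0 -hp addr0.
exact: (big_morph phi hp p0).
Qed.

Theorem corollary3p6 (G : groupoid) (A : pzRingType)
    (one : mor G -> A) (alpha : mor G -> A -> A) :
  connected G ->
  (* A = (+)_{i} A_{e_i}, with A_{e_i} = A 1_{e_i} *)
  \sum_(e : obj G) one (idm e) = 1 ->
  (forall e f : obj G, e != f -> one (idm e) * one (idm f) = 0) ->
  unital_partial_action one alpha ->
  (exists a : A, central a /\ forall e : obj G, trace_j one alpha e a = one (idm e)) ->
  semisimple_skew_extension one alpha.
Proof.
move=> _ _ _ upa [a [ca htr]].
move=> L M N actL actM actN i p hL hM hN [iadd ilin] [padd plin] _ _ _ [q [[qadd qlin] pq]].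
pose E (g : mor G) := mono (one g) g.
have Ein g : one g * one g = one g by rewrite (oo upa).
have Eelt g : skew_elt one (E g) by apply: (mono_elt upa).
have ain g : a * one g * one g = a * one g by rewrite -mulrA (oo upa).
pose Y g n := actN (mono (a * one (ginv g)) (ginv g)) n.
pose q' n := \sum_(g : mor G) actM (E g) (q (Y g n)).
have alo g : alpha (ginv g) (one g) = one (ginv g).
  by have := al_one upa (ginv g); rewrite ginvK.
have oao g : one g * (a * one g) = a * one g by rewrite (oC upa) ain.
have hpq : forall n, p (q' n) = n.
  move=> n; rewrite /q' (addm_sum _ _ _ padd).
  under eq_bigr => g _ do
    rewrite plin // pq /Y (actMM upa hN) ?ain ?Ein // tgt_ginv eqxx alo oao comp_ginvr.
  rewrite (partition_big (fun g => tgt g) predT) //=.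
  transitivity (\sum_(e : obj G) actN (mono (one (idm e)) (idm e)) n); last first.
    by rewrite -(act_one upa hN); case: hN.
  apply: eq_bigr => e _.
  rewrite -htr.
  have -> : trace_j one alpha e a = \sum_(g | tgt g == e) alpha g (a * one (ginv g)).
    rewrite [RHS](partition_big (fun g : mor G => src g) predT) //=.
    by apply: eq_bigr => ei _; apply: eq_bigl => g; rewrite /homset andbC.
  rewrite (act_mono_sum upa hN); last first.
    move=> g /eqP <-.
    have h1 : alpha g (a * one (ginv g)) * one g = alpha g (a * one (ginv g)).
      by apply: (al_in upa); rewrite ain.
    by rewrite -h1 -mulrA (o_sub upa).
  by apply: eq_bigr => g /eqP ->.
have q0 : q 0 = 0 by apply: (addrI (q 0)); rewrite addr0 -qadd addr0.
have q'add : additive_map q'.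
  move=> x y; rewrite /q' -big_split; apply: eq_bigr => g _.
  case: hN => hN1 _ _ _; case: hM => hM1 _ _ _.
  rewrite /Y hN1; last exact: (mono_elt upa (ain _)).
  by rewrite qadd hM1.
have qemb c X : q (actN (skew_emb one c) X) = actM (skew_emb one c) (q X) by apply: qlin.
have Cemb c n : q' (actN (skew_emb one c) n) = actM (skew_emb one c) (q' n).
  rewrite /q' (act_sum_m hM _ _ _ (emb_elt one c)); apply: eq_bigr => g _.
  rewrite (R1 upa hM) ?Ein //.
  rewrite /Y (R2 upa hN) ?ain // ginvK.
  set yg := alpha (ginv g) (c * one g).
  have hyg : yg * one (ginv g) = yg by apply: (al_in upa); rewrite ginvK -mulrA (oo upa).
  have -> : a * one (ginv g) * yg = yg * (a * one (ginv g)).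
    by rewrite -mulrA (oC upa) mulrA ca -mulrA.
  rewrite -(R1 upa hN) ?ain // qemb (R2 upa hM) ?Ein // hyg /yg (al_inv upa); last first.
    by rewrite -mulrA (oo upa).
  by rewrite (oC upa) -mulrA (oo upa).
have CE h n : q' (actN (E h) n) = actM (E h) (q' n).
  pose T' g := actM (skew_emb one (one h)) (actM (E g) (q (Y (gcomp (ginv h) g) n))).
  pose F k := actM (skew_emb one (one h)) (actM (E (gcomp h k)) (q (Y k n))).
  rewrite /q' (act_sum_m hM _ _ _ (Eelt h)).
  transitivity (\sum_(g | tgt g == tgt h) T' g).
    rewrite [RHS]big_mkcond /=; apply: eq_bigr => g _.
    rewrite /Y (actMM upa hN) ?ain ?Ein // src_ginv.
    case: eqP => e; last by rewrite q0 (act_m0 hM (Eelt g)).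
    rewrite ginvK.
    set z := alpha g (a * one (ginv g)).
    have hz : z * one g = z by apply: (al_in upa); rewrite ain.
    have az : alpha (ginv g) z = a * one (ginv g).
      by have := al_inv upa (ain (ginv g)); rewrite ginvK.
    set k' := gcomp (ginv g) h.
    have ez : alpha (ginv g) (z * one h) = a * one (ginv g) * (one (ginv g) * one k').
      rewrite -hz -mulrA (alM upa); first by rewrite az (I1 upa e).
      - by rewrite ginvK hz.
      - by rewrite ginvK -mulrA [one h * _](oC upa) mulrA (oo upa).
    rewrite ez.
    have ek : ginv (gcomp (ginv h) g) = k' by rewrite ginv_comp ?src_ginv // ginvK.
    rewrite /T' /Y ek.
    set w := one (ginv g) * one k'.
    have wC b : w * b = b * w.
      by rewrite /w -mulrA (oC upa k' b) mulrA (oC upa (ginv g) b) -mulrA.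
    have ecoef : a * one (ginv g) * w = w * (a * one k').
      have hwk : w * one k' = w by rewrite /w -mulrA (oo upa).
      have hgw : one (ginv g) * w = w by rewrite /w mulrA (oo upa).
      by rewrite -mulrA hgw mulrA wC -mulrA hwk.
    rewrite ecoef -(R1 upa hN) ?ain // qemb (R2 upa hM) ?Ein //.
    have hw : w * one (ginv g) = w.
      by rewrite /w -mulrA (oC upa k' (one (ginv g))) mulrA (oo upa).
    have tk : tgt (ginv g) = tgt k' by rewrite /k' tgt_comp // src_ginv.
    have := I1 upa tk; rewrite ginvK comp_KV // -/w => aw.
    rewrite hw aw (R1 upa hM) ?Ein //.
    by rewrite mulrA (oo upa) (oC upa).
  symmetry; transitivity (\sum_(k | src h == tgt k) F k).
    rewrite [RHS]big_mkcond /=; apply: eq_bigr => k _.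
    rewrite (actMM upa hM) ?Ein //; case: ifP => // /eqP sk.
    have tk : tgt (ginv h) = tgt k by rewrite tgt_ginv.
    have := I1 upa tk; rewrite ginvK => ah.
    by rewrite alo ah /F (R1 upa hM) ?Ein.
  rewrite (reindex_onto (fun g => gcomp (ginv h) g) (fun k => gcomp h k)) /=; last first.
    by move=> k /eqP sk; rewrite comp_VK.
  apply: eq_big => g; last by case/andP => _ /eqP hh; rewrite /F /T' hh.
  case: (eqVneq (tgt g) (tgt h)) => e.
    have tg : tgt (gcomp (ginv h) g) = src h by rewrite tgt_comp ?src_ginv // tgt_ginv.
    by rewrite tg eqxx comp_KV // eqxx.
  apply/negbTE/andP => [[/eqP sh /eqP hh]].
  have : tgt g = tgt h by rewrite -{1}hh tgt_comp.
  by move=> ee; rewrite ee eqxx in e.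
exists q'; split; last exact: hpq.
split; first exact: q'add.
move=> f n hf.
rewrite (L_dec upa hN n hf) (L_dec upa hM (q' n) hf) (addm_sum _ _ _ q'add).
apply: eq_bigr => k _.
have hk : f k * one k = f k by apply/(inI upa).
have em (X : zmodType) (act : (mor G -> A) -> X -> X) (hX : skew_module one alpha act) m :
    act (mono (f k) k) m = act (skew_emb one (f k)) (act (E k) m).
  by rewrite /E (R1 upa hX) ?Ein // hk.
by rewrite (em _ _ hN) (em _ _ hM) Cemb CE.
Qed.
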